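(* Let $FAF=\langle\mathcal A,\rho\rangle$ be a fuzzy argumentation framework and $E\subseteq\mathcal A$. For every $C\subseteq\mathcal A$: $E\in\mathcal{CE}(FAF,C)$ if and only if for every $S\in SCCS_{FAF}$, $$E\cap S\in\mathcal{CE}\big(FAF\downarrow_{R_{FAF}(S,E)},\,D_{FAF}(S,E)\cap C\big).$$
   Context: Fuzzy sets: a fuzzy set on a crisp set $X$ is a map $S:X\to[0,1]$; $S\subseteq S'$ means $S(x)\le S'(x)$ for all $x$; $\cap,\cup$ are pointwise $\min,\max$; $\mathrm{Supp}(S)=\{x:S(x)>0\}$. A fuzzy point $(x,a)$, $a\in(0,1]$, has value $a$ at $x$ and $0$ elsewhere; $(x,a)\in S$ means $a\le S(x)$. $a*b=\min\{a,b\}$. A fuzzy argumentation framework (FAF) is $\langle\mathcal A,\rho\rangle$ with $\mathrm{Args}$ a crisp set, $\mathcal A$ a fuzzy set on $\mathrm{Args}$, $\rho:\mathrm{Args}\times\mathrm{Args}\to[0,1]$, $\rho_{AB}=\rho(A,B)$; $A$ attacks $B$ iff $\rho_{AB}>0$. Fuzzy arguments are fuzzy points $(A,a)\in\mathcal A$. An attack of $(A,a)$ on $(B,b)$ is tolerable if $\min\{a,\rho_{AB}\}+b\le1$, sufficient otherwise. $(A,a)$ weakens $(B,b)$ to $(B,b')$, $b'=\min\{1-\min\{a,\rho_{AB}\},b\}$. $T\subseteq\mathcal A$ weakening defends $(C,c)$ (i.e. $(C,c)$ is acceptable w.r.t. $T$) if for every fuzzy argument $(B,b)$ sufficiently attacking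 $(C,c)$ there is $(A',a')\in T$ weakening $(B,b)$ to some $(B,b')$ which tolerably attacks $(C,c)$. $T$ is conflict-free if no $(A,a),(B,b)\in T$ with $(A,a)$ sufficiently attacking $(B,b)$; admissible if conflict-free and it weakening defends every element of $T$. For $C\subseteq\mathcal A$: $\mathcal{AE}(FAF,C)$ is the set of admissible $E$ with $E\subseteq C$; $\mathcal{CE}(FAF,C)$ (complete extensions in $C$) is the set of $E\in\mathcal{AE}(FAF,C)$ such that every fuzzy argument $(A,a)\in C$ weakening defended by $E$ satisfies $(A,a)\in E$. Path-equivalence on $\mathrm{Args}$: $A\sim B$ iff $A=B$ or there are chains of attacks from $A$ to $B$ and from $B$ to $A$. $SCC_{FAF}(A)$ is the fuzzy set with value $\mathcal A(B)$ at each $B\sim A$, $0$ elsewhere; $SCCS_{FAF}$ is the set of these. $outparents_{FAF}(S)$ is the fuzzy set of $(B,\mathcal A(B))$ with $B\notin\mathrm{Supp}(S)$ attacking some argument of $\mathrm{Supp}(S)$. For $T\subseteq\mathcal A$, $FAF\downarrow_T=\langle T,\rho|_{\mathrm{Supp}(T)\times\mathrm{Supp}(T)}\rangle$, and notions in $FAF\downarrow_T$ refer to its own fuzzy arguments and attacks. For $E\subseteq\mathcal A$, $S\in SCCS_{FAF}$: $L_{FAF}(S,E)(A)=\max_B\big((E\cap outparents_{FAF}(S))(B)*\rho_{BA}\big)$ for $A\in\mathrm{Supp}(S)$, $0$ elsewhere; $R_{FAF}(S,E)(A)=\min\{\mathcal A(A),1-L_{FAF}(S,E)(A)\}$ for $A\in\mathrm{Supp}(S)$,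 $0$ elsewhere; $D_{FAF}(S,E)$ is the union of fuzzy points $(A,a)\in R_{FAF}(S,E)$ such that for every $(B,b)\in outparents_{FAF}(S)$ sufficiently attacking $(A,a)$ there is $(C,c)\in E$ weakening $(B,b)$ to some $(B,b')$ which tolerably attacks $(A,a)$. *)

(* Defs.v *)
From HB Require Import structures.
From mathcomp Require Import all_boot all_order all_algebra.
From mathcomp Require Import boolp classical_sets reals.
From Stdlib Require Import Relations.

Set Implicit Arguments.
Unset Strict Implicit.
Unset Printing Implicit Defensive.
Import Order.TTheory GRing.Theory Num.Theory.
Local Open Scope ring_scope.
Local Open Scope classical_set_scope.

Section FAF.
Context {R : realType} {Args : finType}.

Definition fuzzy := Args -> R.

Definition fsubset (S S' : fuzzy) : Prop := forall x, S x <= S' x.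
Definition fcap (S S' : fuzzy) : fuzzy := fun x => Num.min (S x) (S' x).
Definition supp (S : fuzzy) (x : Args) : Prop := 0 < S x.

(* the fuzzy point (x,a), a in (0,1], belongs to S *)
Definition fpt_in (S : fuzzy) (x : Args) (a : R) : Prop :=
  0 < a /\ a <= 1 /\ a <= S x.

Definition sufficient (rho : Args -> Args -> R) (A : Args) (a : R) (B : Args) (b : R) : Prop :=
  0 < rho A B /\ 1 < Num.min a (rho A B) + b.
Definition tolerable (rho : Args -> Args -> R) (A : Args) (a : R) (B : Args) (b : R) : Prop :=
  0 < rho A B /\ Num.min a (rho A B) + b <= 1.
Definition weaken (rho : Args -> Args -> R) (A : Args) (a : R) (B : Args) (b : R) : R :=
  Num.min (1 - Num.min a (rho A B)) b.

Definition wdefends (Fa : fuzzy) (rho : Args -> Args -> R) (T : fuzzy) (C : Args) (c : R) : Prop :=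
  forall B b, fpt_in Fa B b -> sufficient rho B b C c ->
    exists A' a', fpt_in T A' a' /\ tolerable rho B (weaken rho A' a' B b) C c.

Definition conflict_free (rho : Args -> Args -> R) (T : fuzzy) : Prop :=
  forall A a B b, fpt_in T A a -> fpt_in T B b -> ~ sufficient rho A a B b.

Definition admissible (Fa : fuzzy) (rho : Args -> Args -> R) (T : fuzzy) : Prop :=
  conflict_free rho T /\ forall C c, fpt_in T C c -> wdefends Fa rho T C c.

Definition AE (Fa : fuzzy) (rho : Args -> Args -> R) (C E : fuzzy) : Prop :=
  admissible Fa rho E /\ fsubset E C.

Definition CE (Fa : fuzzy) (rho : Args -> Args -> R) (C E : fuzzy) : Prop :=
  AE Fa rho C E /\
  forall A a, fpt_in Fa A a -> fpt_in C A a -> wdefends Fa rho E A a -> fpt_in E A a.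

(* restriction FAF|_T = <T, rho restricted to Supp T x Supp T> *)
Definition restr (T : fuzzy) (rho : Args -> Args -> R) : Args -> Args -> R :=
  fun x y => if (0 < T x) && (0 < T y) then rho x y else 0.

Definition reach (rho : Args -> Args -> R) : relation Args :=
  clos_trans Args (fun x y => 0 < rho x y).
Definition pequiv (rho : Args -> Args -> R) (x y : Args) : Prop :=
  x = y \/ (reach rho x y /\ reach rho y x).

Definition SCC (Fa : fuzzy) (rho : Args -> Args -> R) (X : Args) : fuzzy :=
  fun B => if `[< pequiv rho B X >] then Fa B else 0.

Definition outparents (Fa : fuzzy) (rho : Args -> Args -> R) (S : fuzzy) : fuzzy :=
  fun B => if `[< ~ supp S B /\ exists X, supp S X /\ 0 < rho B X >] then Fa B else 0.

Definition Lfun (Fa : fuzzy) (rho : Args -> Args -> R) (S E : fuzzy) : fuzzy :=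
  fun A => if 0 < S A then
             \big[Num.max/0]_(B : Args) Num.min (fcap E (outparents Fa rho S) B) (rho B A)
           else 0.

Definition Rfun (Fa : fuzzy) (rho : Args -> Args -> R) (S E : fuzzy) : fuzzy :=
  fun A => if 0 < S A then Num.min (Fa A) (1 - Lfun Fa rho S E A) else 0.

Definition Dpt (Fa : fuzzy) (rho : Args -> Args -> R) (S E : fuzzy) (A : Args) (a : R) : Prop :=
  fpt_in (Rfun Fa rho S E) A a /\
  forall B b, fpt_in (outparents Fa rho S) B b -> sufficient rho B b A a ->
    exists C c, fpt_in E C c /\ tolerable rho B (weaken rho C c B b) A a.

(* D_FAF(S,E): union of those fuzzy points (pointwise supremum, 0 if none) *)
Definition Dfun (Fa : fuzzy) (rho : Args -> Args -> R) (S E : fuzzy) : fuzzy :=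
  fun A => sup [set a : R | a = 0 \/ Dpt Fa rho S E A a].

End FAF.

(* Main.v *)
Require Import Defs.
From HB Require Import structures.
From mathcomp Require Import all_boot all_order all_algebra.
From mathcomp Require Import boolp classical_sets reals.
From mathcomp Require Import lra.
Import Order.TTheory GRing.Theory Num.Theory.
Local Open Scope ring_scope.

Ltac mins := repeat match goal with |- context[Num.min ?x ?y] => case: (leP x y) end.
Ltac mlra := mins; intros; lra.

Section Gen.
Context {R : realType}.

Lemma bigmax_ub (T : finType) (F : T -> R) i : F i <= \big[Num.max/0]_(j : T) F j.
Proof.
have := mem_index_enum i; elim: (index_enum T) => [|x s IH] //.
rewrite in_cons big_cons => /orP [/eqP ->|/IH h].
  by rewrite le_max lexx.
by rewrite le_max h orbT.
Qed.

Lemma bigmax_attain (T : finType) (F : T -> R) :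
  0 < \big[Num.max/0]_(j : T) F j -> exists i, \big[Num.max/0]_(j : T) F j = F i.
Proof.
elim: (index_enum T) => [|x s IH]; first by rewrite big_nil ltxx.
rewrite big_cons; case: (leP (F x) (\big[Num.max/0]_(j <- s) F j)) => h.
  by move=> /IH.
by move=> _; exists x.
Qed.

Lemma bigmax_bound (T : finType) (F : T -> R) :
  (forall i, 0 <= F i <= 1) -> 0 <= \big[Num.max/0]_(j : T) F j <= 1.
Proof.
move=> hF; apply: (big_ind (fun x => 0 <= x <= 1)) => //.
  by rewrite lexx ler01.
move=> x y /andP[x0 x1] /andP[y0 y1].
by case: (leP x y) => h; apply/andP; split.
Qed.

Lemma argmin_ex (T : finType) (x0 : T) (g : T -> R) : exists c, forall c', g c <= g c'.
Proof.
suff: forall s : seq T, exists c, forall c', c' \in s -> g c <= g c'.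
  by case/(_ (index_enum T)) => c hc; exists c => c'; apply: hc; rewrite mem_index_enum.
elim => [|x s [c hc]]; first by exists x0.
case: (leP (g x) (g c)) => h.
  exists x => c'; rewrite in_cons => /orP [/eqP ->|/hc]; first by [].
  exact: le_trans.
exists c => c'; rewrite in_cons => /orP [/eqP ->|/hc] //; exact: ltW.
Qed.

Lemma ar_w0 (a' b rr a : R) : 0 < a' -> b <= 1 -> 1 < Num.min b rr + a ->
  Num.min (Num.min (1 - Num.min a' 0) b) rr + a <= 1 -> False.
Proof. move=> h1 h2; rewrite (min_r (ltW h1)) subr0 (min_r h2); lra. Qed.

Lemma ar_w_nc (a' r b rr a L : R) : Num.min a' r <= L -> b <= 1 - L ->
  1 < Num.min b rr + a -> Num.min (Num.min (1 - Num.min a' r) b) rr + a <= 1 -> False.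
Proof.
move=> h1 h2; rewrite (@min_r _ _ (1 - Num.min a' r) b); first lra.
lra.
Qed.

Lemma ar_suff (a'' r b' e rr a : R) : 0 < a'' -> 0 <= r -> b' <= e -> b' <= 1 -> 1 < Num.min b' rr + a ->
  Num.min (Num.min (1 - Num.min a'' r) b') rr + a <= 1 -> 0 < r /\ 1 < Num.min a'' r + e.
Proof.
move=> h1 h2 h3 h7 h4 h5.
have h6 : 1 - Num.min a'' r < b'.
  move: h4 h5; case: (leP b' (1 - Num.min a'' r)) => hh; first lra.
  by move=> _ _.
split.
  move: h6; case: (leP a'' r) => ? ?; lra.
lra.
Qed.

Lemma ar_mono (c e r b rr : R) : c <= e ->
  Num.min (Num.min (1 - Num.min e r) b) rr <= Num.min (Num.min (1 - Num.min c r) b) rr.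
Proof.
move=> h; apply: le_min2 => //; apply: le_min2 => //.
by rewrite lerD2l lerN2; apply: le_min2.
Qed.

Lemma mle1 (x y : R) : Num.min x y <= x. Proof. by rewrite ge_min lexx. Qed.
Lemma mle2 (x y : R) : Num.min x y <= y. Proof. by rewrite ge_min lexx orbT. Qed.

Lemma ar_last (x RB b y a : R) : 1 < Num.min RB y + a ->
  Num.min (Num.min x RB) y + a <= 1 -> Num.min (Num.min x b) y + a <= 1.
Proof.
move=> h1 h2; case: (leP x (1 - a)) => hx.
  have := le_trans (mle1 (Num.min x b) y) (mle1 x b); lra.
have : 1 - a < Num.min RB y by lra.
rewrite lt_min => /andP[hR hy].
have : 1 - a < Num.min (Num.min x RB) y by rewrite !lt_min hx hR hy.
lra.
Qed.
End Gen.

Section Main.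
Variables (R : realType) (Args : finType) (Fa : Args -> R) (rho : Args -> Args -> R) (E : Args -> R).
Hypothesis hFa : forall x, 0 <= Fa x <= 1.
Hypothesis hrho : forall x y, 0 <= rho x y <= 1.
Hypothesis hE0 : forall x, 0 <= E x.
Hypothesis hEFa : fsubset E Fa.

Local Notation S X := (SCC Fa rho X).
Local Notation Lx X := (Lfun Fa rho (SCC Fa rho X) E).
Local Notation Rx X := (Rfun Fa rho (SCC Fa rho X) E).
Local Notation Dx X := (Dfun Fa rho (SCC Fa rho X) E).
Local Notation T X := (fcap E (SCC Fa rho X)).
Local Notation outp X := (outparents Fa rho (SCC Fa rho X)).

Lemma Fa0 x : 0 <= Fa x. Proof. by case/andP: (hFa x). Qed.
Lemma Fa1 x : Fa x <= 1. Proof. by case/andP: (hFa x). Qed.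
Lemma r0 x y : 0 <= rho x y. Proof. by case/andP: (hrho x y). Qed.
Lemma r1 x y : rho x y <= 1. Proof. by case/andP: (hrho x y). Qed.
Lemma EFa x : E x <= Fa x. Proof. exact: hEFa. Qed.
Lemma E1 x : E x <= 1. Proof. exact: le_trans (EFa x) (Fa1 x). Qed.

Lemma S_ge0 X B : 0 <= S X B.
Proof. by rewrite /SCC; case: asboolP => _; [exact: Fa0|]. Qed.
Lemma S_eq X B : pequiv rho B X -> S X B = Fa B.
Proof. by move=> h; rewrite /SCC asboolT. Qed.
Lemma S_not X B : ~ pequiv rho B X -> S X B = 0.
Proof. by move=> h; rewrite /SCC asboolF. Qed.
Lemma S_pos X B : 0 < S X B -> pequiv rho B X.
Proof. by rewrite /SCC; case: asboolP => // _; rewrite ltxx. Qed.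
Lemma S_le X B : S X B <= Fa B.
Proof. by rewrite /SCC; case: asboolP => _; [|exact: Fa0]. Qed.

Lemma outp_ge0 X B : 0 <= outp X B.
Proof. by rewrite /outparents; case: asboolP => _; [exact: Fa0|]. Qed.
Lemma outp_le X B : outp X B <= Fa B.
Proof. by rewrite /outparents; case: asboolP => _; [|exact: Fa0]. Qed.
Lemma outp_eq X B A : ~ pequiv rho B X -> 0 < S X A -> 0 < rho B A -> outp X B = Fa B.
Proof.
move=> hn hA hr; rewrite /outparents asboolT //; split.
  by rewrite /supp S_not // ltxx.
by exists A.
Qed.

Lemma L_bound X A : 0 <= Lx X A <= 1.
Proof.
rewrite /Lfun; case: ifP => _; last by rewrite lexx ler01.
apply: bigmax_bound => i; rewrite /fcap.
have := hE0 i; have := outp_ge0 X i; have := r0 i A; have := r1 i A.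
by mins; intros; apply/andP; split; lra.
Qed.

Lemma L_ub X A B : 0 < S X A ->
  Num.min (Num.min (E B) (outp X B)) (rho B A) <= Lx X A.
Proof. move=> h; rewrite /Lfun h. have := (bigmax_ub Args (fun B => Num.min (fcap E (outp X) B) (rho B A)) B). rewrite /fcap /=. exact. Qed.

Lemma L_attain X A : 0 < Lx X A -> 0 < S X A /\
  exists B, Lx X A = Num.min (Num.min (E B) (outp X B)) (rho B A).
Proof.
rewrite /Lfun; case: ifP => h; last by rewrite ltxx.
by move=> /bigmax_attain [i hi]; split => //; exists i.
Qed.

Lemma R_eq X A : 0 < S X A -> Rx X A = Num.min (Fa A) (1 - Lx X A).
Proof. by move=> h; rewrite /Rfun h. Qed.
Lemma R_pos X A : 0 < Rx X A -> 0 < S X A.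
Proof. by rewrite /Rfun; case: ifP => // _; rewrite ltxx. Qed.
Lemma R_ge0 X A : 0 <= Rx X A.
Proof.
rewrite /Rfun; case: ifP => // _.
have := Fa0 A; have /andP[? ?] := L_bound X A; mlra.
Qed.
Lemma R_le X A : Rx X A <= Fa A.
Proof. rewrite /Rfun; case: ifP => _; [mlra|exact: Fa0]. Qed.
Lemma R_le1 X A : Rx X A <= 1.
Proof. exact: le_trans (R_le X A) (Fa1 A). Qed.

Lemma restr_cases (Q : Args -> R) x y : restr Q rho x y = rho x y \/ restr Q rho x y = 0.
Proof. by rewrite /restr; case: ifP; [left|right]. Qed.
Lemma restr_eq (Q : Args -> R) x y : 0 < Q x -> 0 < Q y -> restr Q rho x y = rho x y.
Proof. by move=> hx hy; rewrite /restr hx hy. Qed.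
Lemma restr_pos (Q : Args -> R) x y : 0 < restr Q rho x y ->
  [/\ restr Q rho x y = rho x y, 0 < Q x & 0 < Q y].
Proof. by rewrite /restr; case: ifP => [/andP[hx hy]|]; [|rewrite ltxx]. Qed.

Lemma suff_restr (Q : Args -> R) A a B b :
  sufficient (restr Q rho) A a B b -> sufficient rho A a B b.
Proof. by case=> h1 h2; case: (restr_pos _ _ _ h1) => e _ _; move: h1 h2; rewrite /sufficient e. Qed.

Lemma T_le X B : T X B <= E B.
Proof. by rewrite /fcap; mlra. Qed.
Lemma T_pos X B : 0 < T X B -> 0 < S X B.
Proof. by rewrite /fcap; have := hE0 B; mlra. Qed.
Lemma T_eq X B : pequiv rho B X -> T X B = E B.
Proof. by move=> h; rewrite /fcap S_eq //; have := EFa B; mins => //; lra. Qed.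
Lemma fptT X B b : fpt_in (T X) B b -> fpt_in E B b.
Proof. by case=> [h0 [h1 h2]]; split; [|split] => //; apply: le_trans h2 (T_le X B). Qed.


Lemma hasD X A : has_sup [set a : R | a = 0 \/ Dpt Fa rho (S X) E A a].
Proof.
split; first by exists 0; left.
exists (Rx X A) => y [->|[[_ [_ h]] _]] //; exact: R_ge0.
Qed.

Lemma D_leR X A : Dx X A <= Rx X A.
Proof.
apply: ge_sup; first by exists 0; left.
move=> y [->|[[_ [_ h]] _]] //; exact: R_ge0.
Qed.

Lemma D_ge0 X A : 0 <= Dx X A.
Proof. by apply: (sup_upper_bound (hasD X A)); left. Qed.

Lemma Dpt_leD X A a : Dpt Fa rho (S X) E A a -> a <= Dx X A.
Proof. by move=> h; apply: (sup_upper_bound (hasD X A)); right. Qed.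

Lemma KL X B : conflict_free rho E -> 0 < S X B -> E B <= Rx X B.
Proof.
move=> cf hS; rewrite R_eq //.
have EB := EFa B; have EB1 := E1 B; have /andP[L0 L1] := L_bound X B.
case: (leP (E B) (1 - Lx X B)) => h; first by rewrite le_min EB h.
exfalso.
have Lp : 0 < Lx X B by lra.
case: (L_attain X _ Lp) => _ [B' hB'].
have [hm hr] : 0 < Num.min (E B') (outp X B') /\ 0 < rho B' B.
  by move: Lp; rewrite hB' lt_min => /andP.
apply: (cf B' (Num.min (E B') (outp X B')) B (E B)).
- split; [|split] => //; last exact: mle1.
  exact: le_trans (mle1 _ _) (E1 B').
- split; [|split] => //; lra.
- by split => //; rewrite -hB'; lra.
Qed.

Lemma defend_in X A a B b : fpt_in (Rx X) A a ->
  wdefends (Rx X) (restr (Rx X) rho) (T X) A a ->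
  fpt_in Fa B b -> 0 < S X B -> sufficient rho B b A a ->
  exists A' a', fpt_in E A' a' /\ tolerable rho B (weaken rho A' a' B b) A a.
Proof.
move=> [a0 [a1 aR]] hdef [b0 [b1 bF]] SB [hr hs].
have RA : 0 < Rx X A by lra.
have loc : forall bb, 0 < bb -> bb <= Rx X B -> 1 < Num.min bb (rho B A) + a ->
   exists A' a', fpt_in E A' a' /\ tolerable rho B (weaken rho A' a' B bb) A a.
  move=> bb bb0 bbR hs'.
  have RB : 0 < Rx X B by lra.
  have eBA := restr_eq _ _ _ RB RA.
  have bb1 : bb <= 1 by have := R_le1 X B; lra.
  have hsr : sufficient (restr (Rx X) rho) B bb A a by rewrite /sufficient eBA.
  have [A' [a' [hT htol]]] := hdef B bb (conj bb0 (conj bb1 bbR)) hsr.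
  exists A', a'; split; first exact: (fptT X _ _ hT).
  have [a'0 _] := hT.
  move: htol; rewrite /tolerable /weaken eBA.
  case: (restr_cases (Rx X) A' B) => -> //.
  move=> [_ ht]; exfalso; move: ht; rewrite (min_r (ltW a'0)) subr0 (min_r bb1); lra.
have RBl : Rx X B = Num.min (Fa B) (1 - Lx X B) by exact: R_eq.
have /andP[L0 L1] := L_bound X B.
have R0 := R_ge0 X B.
case: (leP b (Rx X B)) => hb; first by apply: loc => //.
have RBe : Rx X B = 1 - Lx X B.
  by move: hb; rewrite RBl; case: (leP (Fa B) (1 - Lx X B)) => ? ? //; exfalso; lra.
have Lp : 0 < Lx X B by lra.
case: (L_attain X _ Lp) => _ [B' hB'].
have [hEo hr'] : 0 < Num.min (E B') (outp X B') /\ 0 < rho B' B.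
  by move: Lp; rewrite hB' lt_min => /andP.
have E'p : 0 < E B' by move: hEo; rewrite lt_min => /andP[].
case: (leP (Num.min (Rx X B) (rho B A) + a) 1) => h1.
  exists B', (E B'); split; first by split; [|split] => //; exact: E1.
  split => //; rewrite /weaken.
  have hx : 1 - Num.min (E B') (rho B' B) <= Rx X B.
    rewrite RBe lerD2l lerN2 hB'; apply: le_min2 => //; exact: mle1.
  apply: le_trans h1; rewrite lerD2r; apply: le_min2 => //.
  exact: le_trans (mle1 _ _) hx.
have RBp : 0 < Rx X B by move: h1; have := mle1 (Rx X B) (rho B A); lra.
have [A' [a' [hE htol]]] := loc (Rx X B) RBp (lexx _) h1.
exists A', a'; split => //; split => //.
case: htol => _; rewrite /weaken => htol.
exact: ar_last h1 htol.
Qed.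

Lemma Dpt_of X A a : 0 < a -> a <= Dx X A -> Dpt Fa rho (S X) E A a.
Proof.
move=> a0 aD.
have aR : a <= Rx X A := le_trans aD (D_leR X A).
have a1 : a <= 1 := le_trans aR (R_le1 X A).
split; first by [].
move=> B b hB [hr hs].
case: (pselect (exists C c, fpt_in E C c /\ tolerable rho B (weaken rho C c B b) A a)) => // hno.
exfalso.
have [b0 [b1 bO]] := hB.
pose g C := Num.min (weaken rho C (E C) B b) (rho B A).
have gbig : forall C, 1 < g C + a.
  move=> C; case: (leP (E C) 0) => hEC.
    have EC0 : E C = 0 by apply/le_anti; rewrite hEC hE0.
    by rewrite /g /weaken EC0 (min_l (r0 C B)) subr0 (min_r b1).
  rewrite ltNge; apply/negP => hle; apply: hno; exists C, (E C); split.
    by split; [|split] => //; exact: E1.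
  by split.
have [C0 hC0] := argmin_ex _ B g.
have Gbig := gbig C0.
move: (g C0) Gbig hC0 => G Gbig hC0.
pose m := Num.min b (rho B A).
have hsm : 1 < m + a := hs.
have m1 : m <= 1 by rewrite /m; case: (leP b (rho B A)) => ? //; lra.
pose eps := Num.min (G + a - 1) (m + a - 1).
have eps1 : eps <= G + a - 1 by rewrite /eps; case: (leP (G + a - 1) (m + a - 1)) => ?; lra.
have eps2 : eps <= m + a - 1 by rewrite /eps; case: (leP (G + a - 1) (m + a - 1)) => ?; lra.
have eps0 : 0 < eps by rewrite /eps; case: (leP (G + a - 1) (m + a - 1)) => ?; lra.
have [a'' ha'' hlt] := sup_adherent eps0 (hasD X A).
have hlt' : Dx X A - eps < a'' := hlt.
have a''pos : 0 < a'' by lra.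
case: ha'' => [h0|hD]; first by lra.
have [_ hd] := hD.
have hs'' : sufficient rho B b A a'' by split => //; rewrite -/m; lra.
have [C [c [[c0 [c1 cE]] [_ htol]]]] := hd B b hB hs''.
have gC : g C <= Num.min (weaken rho C c B b) (rho B A) by apply: ar_mono.
have := hC0 C; lra.
Qed.

Lemma defend_out X A a B b : 0 < a -> a <= Dx X A -> fpt_in Fa B b ->
  ~ pequiv rho B X -> sufficient rho B b A a ->
  exists A' a', fpt_in E A' a' /\ tolerable rho B (weaken rho A' a' B b) A a.
Proof.
move=> a0 aD hB hn hs.
have [[_ [_ aR]] hd] := Dpt_of X A a a0 aD.
have SA : 0 < S X A by apply: R_pos; lra.
apply: (hd B b) => //.
case: hB => b0 [b1 bF]; split; [|split] => //.
by rewrite (outp_eq X B A hn SA hs.1).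
Qed.

Lemma glob_to_loc X A a : conflict_free rho E -> 0 < a -> a <= Rx X A ->
  wdefends Fa rho E A a -> wdefends (Rx X) (restr (Rx X) rho) (T X) A a.
Proof.
move=> cf a0 aR hdef B b [b0 [b1 bR]] [hr hs].
have [eBA RB RA] := restr_pos _ _ _ hr.
rewrite eBA in hr hs.
have SB := R_pos X B RB.
have hB : fpt_in Fa B b by split; [|split] => //; exact: le_trans bR (R_le X B).
have [A' [a' [[a'0 [a'1 a'E]] htol]]] := hdef B b hB (conj hr hs).
case: (pselect (pequiv rho A' X)) => hp.
  have SA' : 0 < S X A' by rewrite S_eq //; have := EFa A'; lra.
  have RA' : 0 < Rx X A' by have := KL X A' cf SA'; lra.
  exists A', a'; split; first by split; [|split] => //; rewrite T_eq.
  by move: htol; rewrite /tolerable /weaken (restr_eq _ _ _ RA' RB) eBA.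
exfalso.
case: htol => _; rewrite /weaken.
case: (leP (rho A' B) 0) => hr'.
  have -> : rho A' B = 0 by apply/le_anti; rewrite hr' r0.
  by apply: ar_w0.
have hm : Num.min a' (rho A' B) <= Lx X B.
  have := L_ub X B A' SB; rewrite (outp_eq X A' B hp SB hr').
  move=> h; apply: le_trans h; apply: le_min2 => //.
  rewrite le_min a'E /=; exact: le_trans a'E (EFa A').
have hbL : b <= 1 - Lx X B by move: bR; rewrite R_eq // le_min => /andP[].
exact: ar_w_nc hm hbL hs.
Qed.

Lemma def_leR X A a : conflict_free rho E -> fpt_in Fa A a -> 0 < S X A ->
  wdefends Fa rho E A a -> a <= Rx X A.
Proof.
move=> cf [a0 [a1 aF]] SA hdef; rewrite R_eq //.
have /andP[L0 L1] := L_bound X A.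
case: (leP a (1 - Lx X A)) => h.
  by rewrite le_min aF h.
exfalso.
have Lp : 0 < Lx X A by lra.
case: (L_attain X _ Lp) => _ [B' hB'].
move: hB'; set b' := Num.min (E B') (outp X B') => hB'.
have hob := outp_le X B'; have EB1 := E1 B'.
have rB := r0 B' A.
have hb'E : b' <= E B' by exact: mle1.
have hb'o : b' <= outp X B' by exact: mle2.
have hLb : Lx X A <= b' by rewrite hB'; exact: mle1.
have hLr : Lx X A <= rho B' A by rewrite hB'; exact: mle2.
have b'1 : b' <= 1 by lra.
have hsB : sufficient rho B' b' A a by split; [lra|rewrite -hB'; lra].
have hB'F : fpt_in Fa B' b' by split; [lra|split; lra].
have [A'' [a'' [[a''0 [a''1 a''E]] [_ htol]]]] := hdef B' b' hB'F hsB.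
apply: (cf A'' a'' B' (E B')).
- by split; [|split].
- by split; [lra|split; lra].
- move: htol; rewrite /weaken => htol.
  exact: (@ar_suff R _ _ _ _ _ _ a''0 (r0 A'' B') hb'E b'1 hsB.2 htol).
Qed.


Variable C : Args -> R.
Hypothesis hC0 : forall x, 0 <= C x.
Hypothesis hCFa : fsubset C Fa.

Lemma dir1 : CE Fa rho C E -> forall X, CE (Rx X) (restr (Rx X) rho) (fcap (Dx X) C) (T X).
Proof.
case=> [[[cf def] sub] compl] X.
split; [split; [split|] |].
- move=> A a B b hA hB hs.
  apply: (cf A a B b (fptT X _ _ hA) (fptT X _ _ hB)); exact: suff_restr hs.
- move=> C0 c hc.
  have hcE := fptT X _ _ hc.
  have [c0 [c1 cT]] := hc.
  have SC0 : 0 < S X C0 by apply: T_pos; lra.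
  apply: glob_to_loc => //; last exact: def.
  have := KL X C0 cf SC0; have := T_le X C0; lra.
- move=> B.
  have TE := T_le X B.
  have TD : T X B <= Dx X B.
    case: (leP (E B) 0) => hEB; first by have := D_ge0 X B; lra.
    case: (leP (S X B) 0) => hSB.
      have : T X B <= S X B := mle2 _ _.
      have := D_ge0 X B; lra.
    apply: le_trans TE _; apply: Dpt_leD; split.
      split; [|split] => //; [exact: E1 | exact: KL].
    move=> B' b' hB' hs; apply: (def B (E B)) => //.
      split; [|split] => //; exact: E1.
    case: hB' => b0 [b1 bo]; split; [|split] => //; exact: le_trans bo (outp_le X B').
  have TC : T X B <= C B by exact: le_trans TE (sub B).
  by rewrite [Y in _ <= Y]/fcap le_min TD TC.
- move=> A a hRA [a0 [a1 aDC]] hdef.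
  have aD : a <= Dx X A by move: aDC; rewrite /fcap le_min => /andP[].
  have aC : a <= C A by move: aDC; rewrite /fcap le_min => /andP[].
  have [_ [_ aR]] := hRA.
  have SA : 0 < S X A by apply: R_pos; lra.
  have hp := S_pos X A SA.
  split; [|split] => //; rewrite T_eq //.
  have hw : wdefends Fa rho E A a.
    move=> B b hB hs.
    case: (pselect (pequiv rho B X)) => hpB.
      apply: (defend_in X A a B b hRA hdef hB _ hs).
      rewrite S_eq //; case: hB => b0 [_ bF]; lra.
    exact: (defend_out X A a B b a0 aD hB hpB hs).
  have := compl A a (conj a0 (conj a1 (le_trans aR (R_le X A)))) (conj a0 (conj a1 aC)) hw.
  by case=> _ [_ h].
Qed.

Lemma dir2 : (forall X, CE (Rx X) (restr (Rx X) rho) (fcap (Dx X) C) (T X)) -> CE Fa rho C E.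
Proof.
move=> H.
have hT : forall A X, pequiv rho A X -> E A <= Dx X A /\ E A <= C A.
  move=> A X hp; have [[_ sub] _] := H X; move: (sub A).
  by rewrite T_eq // /fcap le_min => /andP[].
have refl : forall A, pequiv rho A A by move=> A; left.
have ER : forall A X, pequiv rho A X -> E A <= Rx X A.
  by move=> A X hp; exact: le_trans (hT A X hp).1 (D_leR X A).
have cf : conflict_free rho E.
  move=> A a B b [a0 [a1 aE]] [b0 [b1 bE]] [hr hs].
  case: (pselect (pequiv rho A B)) => hp.
    have [[[cfl _] _] _] := H B.
    apply: (cfl A a B b).
    - by split; [|split] => //; rewrite T_eq.
    - by split; [|split] => //; rewrite T_eq.
    - have RA : 0 < Rx B A by have := ER A B hp; lra.
      have RB : 0 < Rx B B by have := ER B B (refl B); lra.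
      by rewrite /sufficient restr_eq.
  have SB : 0 < S B B by rewrite S_eq //; have := EFa B; lra.
  have := L_ub B B A SB; rewrite (outp_eq B A B hp SB hr) => hL.
  have := ER B B (refl B); rewrite R_eq // le_min => /andP[_ hbL].
  have hm : Num.min a (rho A B) <= Lx B B.
    apply: le_trans hL; apply: le_min2 => //.
    rewrite le_min aE /=; exact: le_trans aE (EFa A).
  lra.
split; [split; [split|] |].
- exact: cf.
- move=> C0 c [c0 [c1 cE]] B b hB hs.
  case: (pselect (pequiv rho B C0)) => hp.
    have [[[_ dl] _] _] := H C0.
    have h1 : fpt_in (Rx C0) C0 c.
      split; [|split] => //; exact: le_trans cE (ER C0 C0 (refl C0)).
    have h2 : wdefends (Rx C0) (restr (Rx C0) rho) (T C0) C0 c.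
      by apply: dl; split; [|split] => //; rewrite T_eq.
    have h3 : 0 < S C0 B by rewrite S_eq //; case: hB => b0 [_ bF]; lra.
    exact: (defend_in C0 C0 c B b h1 h2 hB h3 hs).
  apply: (defend_out C0 C0 c B b c0 _ hB hp hs).
  exact: le_trans cE (hT C0 C0 (refl C0)).1.
- move=> A; exact: (hT A A (refl A)).2.
- move=> A a hA hCa hdef.
  have [[_ _] cl] := H A.
  have SA : 0 < S A A by rewrite S_eq //; case: hA => a0 [_ aF]; lra.
  have aR := def_leR A A a cf hA SA hdef.
  have [a0 [a1 aF]] := hA.
  have hRA : fpt_in (Rx A) A a by split; [|split].
  have aD : a <= Dx A A.
    apply: Dpt_leD; split => //.
    move=> B b [b0 [b1 bo]] hs; apply: hdef hs; split; [|split] => //.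
    exact: le_trans bo (outp_le A B).
  have [_ [_ aC]] := hCa.
  have hDC : fpt_in (fcap (Dx A) C) A a.
    by split; [|split] => //; rewrite /fcap le_min aD aC.
  have := cl A a hRA hDC (glob_to_loc A A a cf a0 aR hdef).
  case=> _ [_ h]; split; [|split] => //; exact: le_trans h (T_le A A).
Qed.

Lemma main_sec : CE Fa rho C E <->
  forall X, CE (Rx X) (restr (Rx X) rho) (fcap (Dx X) C) (T X).
Proof. by split; [exact: dir1 | exact: dir2]. Qed.

End Main.

Theorem mainTheorem4 (R : realType) (Args : finType)
    (Fa : Args -> R) (rho : Args -> Args -> R) (E : Args -> R) :
  (forall x, 0 <= Fa x <= 1) ->
  (forall x y, 0 <= rho x y <= 1) ->
  (forall x, 0 <= E x) -> fsubset E Fa ->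
  forall C : Args -> R, (forall x, 0 <= C x) -> fsubset C Fa ->
  (CE Fa rho C E <->
   forall X : Args,
     CE (Rfun Fa rho (SCC Fa rho X) E)
        (restr (Rfun Fa rho (SCC Fa rho X) E) rho)
        (fcap (Dfun Fa rho (SCC Fa rho X) E) C)
        (fcap E (SCC Fa rho X))).
Proof.
move=> hFa hrho hE0 hEFa C hC0 hCFa.
exact: main_sec.
Qed.
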